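(* For every integer $k\ge3$, there are infinitely many pairwise non-isomorphic connected $k$-regular highly-regular graphs which are not distance-regular.
   Context: A graph $\Gamma$ of order $n$ is highly-regular with collapsed adjacency matrix $C=[c_{i,j}]_{1\le i,j\le m}$, where $2\le m<n$ (the value $m=n$ allowed only when $n=2$), if for every vertex $u$ there is a partition of $V(\Gamma)$ into nonempty sets $V_1(u)=\{u\},\dots,V_m(u)$ such that every $y\in V_j(u)$ is adjacent to exactly $c_{i,j}$ vertices of $V_i(u)$. A connected graph is distance-regular if for all $u,v$ the numbers $|D_1(v)\cap D_{i-1}(u)|$, $|D_1(v)\cap D_i(u)|$, $|D_1(v)\cap D_{i+1}(u)|$ depend only on $i=d(u,v)$, where $D_i(u)=\{v:d(u,v)=i\}$. *)

(* Defs.v *)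
From mathcomp Require Import all_boot.
Unset Strict Implicit. Unset Printing Implicit Defensive.

Record graph := Graph { gn : nat; gadj : rel (ordinal gn) }.
Arguments gadj : clear implicits.

Definition simple (G : graph) : Prop :=
  (forall x y : 'I_(gn G), gadj G x y = gadj G y x) /\
  (forall x : 'I_(gn G), ~~ gadj G x x).

Definition nbhd {G : graph} (v : 'I_(gn G)) : {set 'I_(gn G)} :=
  [set w | gadj G v w].

Definition regular (G : graph) (k : nat) : Prop :=
  forall v : 'I_(gn G), #|nbhd v| = k.

Definition connected (G : graph) : Prop :=
  forall x y : 'I_(gn G), connect (gadj G) x y.

Fixpoint ball {G : graph} (i : nat) (u : 'I_(gn G)) : {set 'I_(gn G)} :=
  match i with
  | 0 => [set u]
  | j.+1 => ball j u :|: [set w | [exists x in ball j u, gadj G x w]]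
  end.

Definition sphere {G : graph} (i : nat) (u : 'I_(gn G)) : {set 'I_(gn G)} :=
  match i with
  | 0 => [set u]
  | j.+1 => ball j.+1 u :\: ball j u
  end.

Definition sphere_pred {G : graph} (i : nat) (u : 'I_(gn G)) : {set 'I_(gn G)} :=
  match i with
  | 0 => set0
  | j.+1 => sphere j u
  end.

Definition distance_regular (G : graph) : Prop :=
  connected G /\
  forall (i : nat) (u v u' v' : 'I_(gn G)),
    v \in sphere i u -> v' \in sphere i u' ->
    [/\ #|nbhd v :&: sphere_pred i u| = #|nbhd v' :&: sphere_pred i u'|,
        #|nbhd v :&: sphere i u| = #|nbhd v' :&: sphere i u'| &
        #|nbhd v :&: sphere i.+1 u| = #|nbhd v' :&: sphere i.+1 u'|].

(* Highly-regular with some collapsed adjacency matrix C (m x m, indices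
   shifted by one: index 0 stands for V_1). *)
Definition highly_regular (G : graph) : Prop :=
  exists (m : nat) (C : 'I_m -> 'I_m -> nat),
    2 <= m /\ (m < gn G \/ (m = gn G /\ gn G = 2)) /\
    forall u : 'I_(gn G), exists P : 'I_(gn G) -> 'I_m,
      (forall i : 'I_m, exists x, P x = i) /\
      (forall x, nat_of_ord (P x) = 0 <-> x = u) /\
      (forall (i j : 'I_m) (y : 'I_(gn G)), P y = j ->
          #|[set x | gadj G y x & P x == i]| = C i j).

Definition isomorphic (G H : graph) : Prop :=
  exists f : 'I_(gn G) -> 'I_(gn H),
    bijective f /\ forall x y, gadj H (f x) (f y) = gadj G x y.

(* Main.v *)
Require Import Defs.
From mathcomp Require Import all_boot zify.
Set Implicit Arguments. Unset Strict Implicit.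

Definition diffn (n a b : nat) := if a <= b then b - a else b + n - a.
Definition Sb (n N s : nat) := [|| s == 1, s == n.-1 | (N %| s) && (s != 0)].
Definition cgraph (p N : nat) : graph :=
  @Graph p.+1 (fun x y : 'I_p.+1 => Sb p.+1 N (diffn p.+1 x y)).

Lemma diff_lt n a b : a < n -> b < n -> diffn n a b < n.
Proof. rewrite /diffn => ? ?; case: ifP => ?; lia. Qed.
Lemma diff0 n a b : a < n -> b < n -> (diffn n a b == 0) = (a == b).
Proof. rewrite /diffn => ? ?; case: ifP => ?; lia. Qed.
Lemma diff_tr n a b c : a < n -> b < n -> c < n ->
  diffn n (diffn n c a) (diffn n c b) = diffn n a b.
Proof.
move=> ? ? ?; rewrite {3}/diffn {2}/diffn; case: leqP => ?; case: leqP => ?;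
rewrite /diffn; do 2 case: ifP => ?; lia.
Qed.
Lemma diff_neg n a b c : a < n -> b < n -> c < n ->
  diffn n (diffn n a c) (diffn n b c) = diffn n b a.
Proof.
move=> ? ? ?; rewrite {3}/diffn {2}/diffn; case: leqP => ?; case: leqP => ?;
rewrite /diffn; do 2 case: ifP => ?; lia.
Qed.
Lemma diff_sum n a b : a < n -> b < n -> a != b -> diffn n a b + diffn n b a = n.
Proof. rewrite /diffn => ? ? ?; do 2 case: ifP => ?; lia. Qed.
Lemma diff_self n a : diffn n a a = 0.
Proof. by rewrite /diffn leqnn subnn. Qed.

Lemma Sb_sym n N s : N %| n -> 0 < s < n -> Sb n N s = Sb n N (n - s).
Proof.
move=> dN /andP[s0 sn]; rewrite /Sb.
rewrite (dvdn_subr (ltnW sn) dN).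
have -> : (s == 1) = (n - s == n.-1) by lia.
have -> : (s == n.-1) = (n - s == 1) by lia.
have -> : (s != 0) = (n - s != 0) by lia.
by case: (n - s == 1); case: (n - s == n.-1).
Qed.

Lemma Sb_diff_sym n N a b : N %| n -> a < n -> b < n ->
  Sb n N (diffn n a b) = Sb n N (diffn n b a).
Proof.
move=> dN an bn; case: (eqVneq a b) => [->//|ab].
have := diff_sum an bn ab; have := diff0 an bn; have := diff0 bn an.
have := diff_lt an bn; have := diff_lt bn an.
move=> h1 h2 h3 h4 h5; rewrite (negbTE ab) in h4; rewrite [b == a]eq_sym (negbTE ab) in h3.
rewrite (Sb_sym dN (s:=diffn n a b)); last by apply/andP; split; lia.
congr Sb; lia.
Qed.

Lemma dvd_small N s : 0 < s -> s < N -> N %| s = false.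
Proof. move=> s0 sN; apply/negP => /(dvdn_leq s0); lia. Qed.

Lemma cardA p N a : 4 <= N -> 2 <= a -> p.+1 = a * N ->
  #|[set s : 'I_p.+1 | (N %| s) && (s != 0 :> nat)]| = a.-1.
Proof.
move=> hN ha hp.
have -> : [set s : 'I_p.+1 | (N %| s) && (s != 0 :> nat)] =
  [set inord (j.+1 * N) | j : 'I_a.-1].
  apply/setP => s; rewrite inE; apply/idP/imsetP.
  - case/andP => /dvdnP [q hq] s0.
    have qa : q.-1 < a.-1.
      have : s < p.+1 by []. rewrite hq hp. move: s0; rewrite hq. nia.
    exists (Ordinal qa) => //; apply/val_inj; rewrite /= inordK; last first.
      move: (ltn_ord s); rewrite hq hp. move: s0; rewrite hq; nia.
    move: s0; rewrite hq; case: q {hq qa} => //.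
  - case=> j _ ->; rewrite inordK; last by move: (ltn_ord j); rewrite hp; nia.
    rewrite dvdn_mull //=; nia.
rewrite card_imset ?card_ord // => i j /(congr1 val) /=.
rewrite !inordK; [|move: (ltn_ord j); rewrite hp; nia|move: (ltn_ord i); rewrite hp; nia].
move=> h; apply/val_inj => /=; nia.
Qed.

Lemma cardS p N a : 4 <= N -> 2 <= a -> p.+1 = a * N ->
  #|[set s : 'I_p.+1 | Sb p.+1 N s]| = a.+1.
Proof.
move=> hN ha hp.
have p7 : 7 <= p by nia.
have dN : N %| p.+1 by rewrite hp dvdn_mull.
have -> : [set s : 'I_p.+1 | Sb p.+1 N s] =
   inord 1 |: (inord p |: [set s : 'I_p.+1 | (N %| s) && (s != 0 :> nat)]).
  apply/setP => s; rewrite !inE /Sb -!val_eqE /= !inordK //; lia.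
rewrite !cardsU1 (cardA hN ha hp) !inE -!val_eqE /= !inordK //; try lia.
have -> : (1 == p) = false by lia.
rewrite dvd_small //; last lia.
have -> : N %| p = false.
  have := dvdn_subr (m := p.+1) (n := 1) (d := N) (leq_trans (isT : 0 < 1) (ltn0Sn p)) dN.
  rewrite subn1 /= => ->; rewrite dvd_small //; lia.
simpl; lia.
Qed.

Lemma diff_inj n a b c : a < n -> b < n -> c < n -> diffn n a b = diffn n a c -> b = c.
Proof. rewrite /diffn => ? ? ?; do 2 case: ifP => ?; lia. Qed.


Lemma cg_simple p N : N %| p.+1 -> 0 < p -> simple (cgraph p N).
Proof.
move=> dN p0; split => x /=.
  by move=> y; apply: Sb_diff_sym.
rewrite diff_self /Sb andbF orbF /=; lia.
Qed.

Lemma cg_regular p N a : 4 <= N -> 2 <= a -> p.+1 = a * N -> regular (cgraph p N) a.+1.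
Proof.
move=> hN ha hp v /=.
have -> : @nbhd (cgraph p N) v =
   (fun w : 'I_p.+1 => inord (diffn p.+1 v w) : 'I_p.+1) @^-1: [set s : 'I_p.+1 | Sb p.+1 N s].
  by apply/setP => w; rewrite !inE inordK // diff_lt.
rewrite card_preimset ?(cardS hN ha hp) // => x y /(congr1 val) /=.
rewrite !inordK ?diff_lt // => /diff_inj h; apply/val_inj; exact: h.
Qed.

Lemma cg_connected p N : N %| p.+1 -> 0 < p -> connected (cgraph p N).
Proof.
move=> dN p0.
have sym : symmetric (gadj (cgraph p N)) by move=> x y /=; apply: Sb_diff_sym.
have h0 : forall m, m < p.+1 -> connect (gadj (cgraph p N)) ord0 (inord m).
  elim=> [_|m IH hm].
    have -> : inord 0 = ord0 :> 'I_p.+1 by apply/val_inj; rewrite /= inordK.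
    exact: connect0.
  apply: connect_trans (IH (ltnW hm)) (connect1 _).
  by rewrite /= !inordK ?(ltnW hm) // /diffn leqnSn subSn // subnn.
by move=> x y; apply: (connect_trans (y:=ord0)); [rewrite (sym_connect_sym sym) -(inord_val x) | rewrite -(inord_val y)]; apply: h0.
Qed.

Lemma lhs_nat p N a w : 4 <= N -> 2 <= a -> p.+1 = a * N -> w < p.+1 ->
  [&& Sb p.+1 N (diffn p.+1 2 w), Sb p.+1 N w & w != 0] = (w == 1).
Proof.
move=> hN ha hp wn.
have p7 : 7 <= p by nia.
have dN : N %| p.+1 by rewrite hp dvdn_mull.
apply/idP/eqP; last first.
  move=> ->; rewrite /Sb /diffn /=.
  rewrite andbT; apply/or3P; apply: Or32; lia.
case/and3P => h1 h2 w0; move: h2; rewrite /Sb /= => /or3P [/eqP//|/eqP ew|/andP [dw _]].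
  move: h1; rewrite ew /Sb /diffn.
  have -> : 2 <= p by lia.
  have -> : p - 2 == 1 = false by lia.
  have -> : p - 2 == p = false by lia.
  have -> : N %| p - 2 = false.
    have -> : p - 2 = p.+1 - 3 by lia.
    rewrite dvdn_subr //; last lia. rewrite dvd_small //.
  by [].
have wN : N <= w by apply: dvdn_leq => //; lia.
move: h1; rewrite /Sb /diffn.
have -> : 2 <= w by lia.
have -> : w - 2 == 1 = false by lia.
have -> : w - 2 == p = false by lia.
rewrite dvdn_subr //; last lia. rewrite (@dvd_small N 2) //; lia.
Qed.

Lemma ball1E (G : graph) (u w : 'I_(gn G)) :
  (w \in ball 1 u) = (w == u) || gadj G u w.
Proof.
rewrite /= !inE; congr orb; apply/existsP/idP => [[x /andP [] ]|h].
  by rewrite inE => /eqP ->.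
by exists u; rewrite inE eqxx.
Qed.

Lemma ball2I (G : graph) (u x w : 'I_(gn G)) :
  x \in ball 1 u -> gadj G x w -> w \in ball 2 u.
Proof.
move=> hx hw; rewrite [ball 2 u]/= !inE; apply/orP; right.
by apply/existsP; exists x; rewrite hx.
Qed.

Lemma cg_notdr p N a : 4 <= N -> 2 <= a -> p.+1 = a * N ->
  ~ distance_regular (cgraph p N).
Proof.
move=> hN ha hp [_ H].
have p7 : 7 <= p by nia.
have dN : N %| p.+1 by rewrite hp dvdn_mull.
have l1 : 1 < p.+1 by lia. have l2 : 2 < p.+1 by lia.
have lN : N < p.+1 by nia. have lN1 : N.+1 < p.+1 by nia.
pose G := cgraph p N.
pose u := ord0 : 'I_p.+1.
pose v := inord 2 : 'I_p.+1.
pose v' := inord N.+1 : 'I_p.+1.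
pose o1 := inord 1 : 'I_p.+1.
pose oN := inord N : 'I_p.+1.
have adj1 : gadj G u o1 by rewrite /G /u /o1 /= inordK ?ltnS // /diffn /Sb /=; lia.
have hv : v \in @sphere G 2 u.
  rewrite /v.
  rewrite /sphere inE; apply/andP; split; last first.
    apply: (ball2I (G := G) (x := o1)); first by rewrite ball1E adj1 orbT.
    rewrite /G /u /o1 /= !inordK // /diffn /=; by rewrite /Sb.
  rewrite ball1E negb_or -val_eqE /= !inordK // /diffn /Sb /=.
  have -> : (2 == p) = false by lia.
  by rewrite dvd_small //; lia.
have hv' : v' \in @sphere G 2 u.
  rewrite /v'.
  rewrite /sphere inE; apply/andP; split; last first.
    apply: (ball2I (G := G) (x := o1)); first by rewrite ball1E adj1 orbT.
    rewrite /= !inordK /diffn /= ?subSS ?subn0; try lia.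
    by rewrite /Sb dvdnn andTb; apply/or3P; apply: Or33; lia.
  rewrite ball1E negb_or -val_eqE /= !inordK /diffn /Sb /= ?subn0; try lia.
  have -> : (N.+1 == p) = false by nia.
  have -> : (N.+1 == 1) = false by lia.
  have -> : N %| N.+1 = false.
    by rewrite -addn1 (dvdn_addr 1 (dvdnn N)) dvd_small //; lia.
  by [].
case: (H 2 u v u v' hv hv') => Hc _ _.
have e1 : @nbhd G v :&: @sphere_pred G 2 u = [set o1].
  apply/setP => w; rewrite /sphere_pred /sphere in_setI in_setD ball1E !inE.
  rewrite /G /u /v /o1 /= -!val_eqE /= !inordK // /diffn leq0n subn0.
  rewrite -(lhs_nat hN ha hp (ltn_ord w)) /diffn.
  by case: (nat_of_ord w == 0); case: (Sb _ _ (nat_of_ord w)); rewrite ?andbF ?andbT.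
have e2 : [set o1; oN] \subset @nbhd G v' :&: @sphere_pred G 2 u.
  apply/subsetP => w; rewrite in_set2 => /orP [] /eqP ->;
  rewrite /sphere_pred /sphere in_setI in_setD (ball1E (G:=G)) !inE;
  rewrite /G /u /v' /o1 /oN /= -!val_eqE /= !inordK // /diffn /=.
  - rewrite ifF; last lia. have -> : 1 + p.+1 - N.+1 = p.+1 - N by lia.
    rewrite /Sb dvdn_subr ?dvdnn //; last lia.
    rewrite eqxx /= andbT; apply/or3P; apply: Or33; lia.
  - rewrite ltnn subn0 /Sb dvdnn; have -> : N + p.+1 - N.+1 = p by lia.
    rewrite eqxx orbT /=; apply/andP; split; first lia.
    apply/orP; right; apply/or3P; apply: Or33; lia.
have := subset_leq_card e2; rewrite -Hc e1 cards1 cards2.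
have -> : o1 != oN by rewrite -val_eqE /= !inordK //; lia.
by [].
Qed.

Definition dist n u x := minn (diffn n u x) (diffn n x u).

Lemma dist_le n h u x : n = 2 * h -> u < n -> x < n -> dist n u x <= h.
Proof. rewrite /dist /diffn => ? ? ?; do 2 case: ifP => ?; lia. Qed.

Lemma diff_inj2 n a b c : a < n -> b < n -> c < n -> diffn n b a = diffn n c a -> b = c.
Proof. rewrite /diffn => ? ? ?; do 2 case: ifP => ?; lia. Qed.

Lemma card_bij (T : finType) (f : T -> T) (A B : {set T}) :
  injective f -> (forall x, (x \in A) = (f x \in B)) -> #|A| = #|B|.
Proof.
move=> fi hAB; rewrite -(card_preimset B fi).
have -> // : A = f @^-1: B by apply/setP => x; rewrite inE hAB.
Qed.

Lemma cg_hr p N h : N %| p.+1 -> p.+1 = 2 * h -> 2 <= h -> highly_regular (cgraph p N).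
Proof.
move=> dN hp h2.
pose P (u x : 'I_p.+1) : 'I_h.+1 := inord (dist p.+1 u x).
have PE u x : nat_of_ord (P u x) = dist p.+1 u x.
  by rewrite inordK // ltnS; apply: dist_le.
pose C (i j : 'I_h.+1) := #|[set x : 'I_p.+1 | Sb p.+1 N (diffn p.+1 (@inord p j) x) & P ord0 x == i]|.
exists h.+1, C; split; first lia.
split; first by left => /=; lia.
move=> u; change 'I_p.+1 in u; have uP : u < p.+1 := ltn_ord u; exists (P u); split; [|split].
- move=> i; pose x := (inord (if u + i < p.+1 then u + i else u + i - p.+1) : 'I_p.+1).
  exists x; apply: val_inj; rewrite /= PE /x inordK; last first.
    have := ltn_ord i; case: ifP => ? ?; lia.
  have := ltn_ord i.
  rewrite /dist /diffn; case: (ltnP (u + i) p.+1) => ?; do 2 case: ifP => ?.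
  all: try (try clear x; move=> ?; lia).
- move=> z; change 'I_p.+1 in z; rewrite PE; split => [hx|->]; last first.
    by rewrite /dist diff_self.
  have xP : z < p.+1 := ltn_ord z; apply: (@ord_inj p.+1); move: hx.
  rewrite /dist /diffn; do 2 case: ifP => ?; lia.
move=> i j y hy /=; change 'I_p.+1 in y.
pose f (x : 'I_p.+1) : 'I_p.+1 := inord (diffn p.+1 u x).
have fE x : nat_of_ord (f x) = diffn p.+1 u x by rewrite inordK // diff_lt.
have finj : injective f.
  move=> a b /(congr1 (@nat_of_ord p.+1)); rewrite !fE => /diff_inj h0; apply: (@ord_inj p.+1); exact: h0.
have distT x : dist p.+1 0 (f x) = dist p.+1 u x.
  rewrite /dist fE /= {1}/diffn leq0n subn0; congr minn.
  by rewrite -[in RHS](diff_tr (c := u)) // diff_self.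
rewrite (card_bij (B := [set z : 'I_p.+1 | Sb p.+1 N (diffn p.+1 (f y) z) & P ord0 z == i]) finj); last first.
  move=> x; rewrite !inE !fE diff_tr //; congr andb.
  by rewrite -!val_eqE /= !PE distT.
have hy' : dist p.+1 0 (f y) = j by rewrite distT -PE hy.
have : (nat_of_ord (f y) = j) \/ (nat_of_ord (f y) = p.+1 - j /\ 0 < j).
  move: hy'; have := ltn_ord (f y); rewrite /dist /diffn /=; case: ifP => ?; lia.
case=> [ej|[ej j0]].
  rewrite /C; have -> : (inord j : 'I_p.+1) = f y.
    apply/val_inj; rewrite /= ej inordK //; have := ltn_ord j; lia.
  by [].
pose g (x : 'I_p.+1) : 'I_p.+1 := inord (diffn p.+1 x 0).
have gE x : nat_of_ord (g x) = diffn p.+1 x 0 by rewrite inordK // diff_lt.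
have ginj : injective g.
  move=> a b /(congr1 (@nat_of_ord p.+1)); rewrite !gE => /diff_inj2 h0; apply: (@ord_inj p.+1); exact: h0.
rewrite /C; apply: (card_bij ginj) => x; rewrite !inE.
have -> : (inord j : 'I_p.+1) = g (f y).
  apply: (@ord_inj p.+1); rewrite gE ej inordK /diffn /=; have := ltn_ord j; try lia.
  case: ifP => ? ?; lia.
rewrite !gE diff_neg // (Sb_diff_sym dN) //; congr andb.
have -> : P ord0 (g x) = P ord0 x; last by [].
apply: (@ord_inj h.+1); rewrite !PE /dist gE.
have -> : diffn p.+1 (diffn p.+1 x 0) 0 = diffn p.+1 0 x.
  by rewrite -{2}(diff_self p.+1 0) diff_neg.
rewrite minnC; congr minn; rewrite /diffn leq0n subn0 //.
Qed.

Theorem theoremA4 (k : nat) (hk : 3 <= k) :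
  exists F : nat -> graph,
    (forall t, [/\ simple (F t), connected (F t), regular (F t) k,
                  highly_regular (F t) & ~ distance_regular (F t)]) /\
    (forall s t, s <> t -> ~ isomorphic (F s) (F t)).
Proof.
exists (fun t => cgraph ((k.-1 * (2 * (t + 2))).-1) (2 * (t + 2))).
split.
  move=> t.
  have hN : 4 <= 2 * (t + 2) by lia.
  have ha : 2 <= k.-1 by lia.
  have hp : ((k.-1 * (2 * (t + 2))).-1).+1 = k.-1 * (2 * (t + 2)) by nia.
  have dN : 2 * (t + 2) %| ((k.-1 * (2 * (t + 2))).-1).+1 by rewrite hp dvdn_mull.
  have p0 : 0 < (k.-1 * (2 * (t + 2))).-1 by nia.
  split.
  - exact: cg_simple.
  - exact: cg_connected.
  - have -> : k = k.-1.+1 by lia.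
    exact: cg_regular.
  - apply: (cg_hr (h := k.-1 * (t + 2))) => //; nia.
  - exact: (cg_notdr hN ha hp).
move=> s t st [f [fb _]].
have := bij_eq_card fb; rewrite !card_ord /= => e.
apply: st; nia.
Qed.
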